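(* Let $R$ be a ring and $S$ a multiplicatively closed subset of $R$ consisting of central regular elements. If $R$ is almost Armendariz, then the localization $S^{-1}R=\{u^{-1}a : u\in S, a\in R\}$ is almost Armendariz.
   Context: All rings are associative with identity. An element is regular if it is not a zero divisor (left or right). For a ring $R$, $P(R)$ denotes the prime radical of $R$ (the intersection of all prime ideals of $R$, equivalently the set of strongly nilpotent elements of $R$). A ring $R$ is called almost Armendariz if whenever $f(x)=\sum_{i=0}^m a_ix^i$ and $g(x)=\sum_{j=0}^n b_jx^j\in R[x]$ satisfy $f(x)g(x)=0$, then $a_ib_j\in P(R)$ for all $0\le i\le m$, $0\le j\le n$. *)

(* Defs.v *)
From HB Require Import structures.
From mathcomp Require Import all_boot all_order all_algebra.
Set Implicit Arguments. Unset Strict Implicit. Unset Printing Implicit Defensive.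
Import GRing.Theory.
Local Open Scope ring_scope.

Definition is_ideal (R : nzRingType) (I : R -> Prop) : Prop :=
  [/\ I 0,
      (forall a b, I a -> I b -> I (a - b)),
      (forall r a, I a -> I (r * a)) &
      (forall r a, I a -> I (a * r))].

Definition prime_ideal (R : nzRingType) (I : R -> Prop) : Prop :=
  [/\ is_ideal I, ~ I 1 &
      (forall a b, (forall r, I (a * r * b)) -> I a \/ I b)].

Definition prime_radical (R : nzRingType) (a : R) : Prop :=
  forall I : R -> Prop, prime_ideal I -> I a.

Definition almost_armendariz (R : nzRingType) : Prop :=
  forall f g : {poly R}, f * g = 0 ->
    forall i j : nat, prime_radical (f`_i * g`_j).

Definition mult_closed (R : nzRingType) (S : R -> Prop) : Prop :=
  S 1 /\ (forall u v, S u -> S v -> S (u * v)).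

Definition central (R : nzRingType) (s : R) : Prop :=
  forall r : R, s * r = r * s.

Definition regular (R : nzRingType) (s : R) : Prop :=
  (forall x : R, s * x = 0 -> x = 0) /\ (forall x : R, x * s = 0 -> x = 0).

Definition two_sided_inverse (T : nzRingType) (x v : T) : Prop :=
  v * x = 1 /\ x * v = 1.

(* T (via the embedding phi) is the ring of fractions S^{-1}R:
   phi is injective, the images of S are invertible, and every element of T
   has the form u^{-1} a with u in S, a in R. *)
Definition is_localization (R T : nzRingType) (S : R -> Prop)
  (phi : {rmorphism R -> T}) : Prop :=
  [/\ injective phi,
      (forall s, S s -> exists v, two_sided_inverse (phi s) v) &
      (forall t : T, exists u a, S u /\ exists v,
          two_sided_inverse (phi u) v /\ t = v * phi a)].

(* Main.v *)
Require Import Defs.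
From HB Require Import structures.
From mathcomp Require Import all_boot all_order all_algebra.
Import GRing.Theory.
Local Open Scope ring_scope.

Section Aux.
Variables (R T : nzRingType) (S : R -> Prop) (phi : {rmorphism R -> T}).
Hypothesis hS : mult_closed S.
Hypothesis hC : forall s, S s -> central s.
Hypothesis hL : is_localization S phi.

Lemma phi_central u : S u -> forall t : T, phi u * t = t * phi u.
Proof.
move=> Su t; case: hL => _ _ /(_ t) [u' [a [Su' [w [[w1 w2] ->]]]]].
have cw : phi u * w = w * phi u.
  have e : phi u * phi u' = phi u' * phi u by rewrite -!rmorphM hC.
  by rewrite -[phi u * w]mul1r -w1 -!mulrA (mulrA (phi u')) -e -(mulrA (phi u)) w2 mulr1.
by rewrite mulrA cw -!mulrA -!rmorphM hC.
Qed.

Lemma inv_central u w : S u -> two_sided_inverse (phi u) w ->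
  forall t : T, w * t = t * w.
Proof.
move=> Su [w1 w2] t.
by rewrite -[w * t]mulr1 -w2 !mulrA -(mulrA w t) -(@phi_central u Su t) mulrA w1 mul1r.
Qed.

Lemma clear_den n (c : nat -> T) : exists u, S u /\ exists b : nat -> R,
  forall i, (i < n)%N -> phi u * c i = phi (b i).
Proof.
elim: n => [|n [u [Su [b hb]]]].
  by exists 1; split; [case: hS|exists (fun _ => 0)].
case: hL => _ _ /(_ (c n)) [u' [a [Su' [w [[w1 w2] e]]]]].
exists (u * u'); split; first by case: hS => _; apply.
exists (fun i => if i == n then u * a else u' * b i) => i; rewrite ltnS leq_eqVlt.
case: eqP => [-> _|_ /= lt]; first by rewrite e rmorphM -mulrA (mulrA (phi u') w) w2 mul1r rmorphM.
by rewrite -(hC _ Su' u) !rmorphM -mulrA hb.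
Qed.

Lemma clear_poly (f : {poly T}) : exists u, S u /\ exists F : {poly R},
  map_poly phi F = (phi u)%:P * f.
Proof.
have [u [Su [b hb]]] := clear_den (size f) (fun i => f`_i).
exists u; split => //; exists (\poly_(i < size f) b i).
apply/polyP => i; rewrite coef_map coefCM coef_poly.
case: ltnP => h; first by rewrite hb.
by rewrite raddf0 nth_default ?mulr0.
Qed.

Lemma pre_prime (I : T -> Prop) : prime_ideal I -> prime_ideal (fun a => I (phi a)).
Proof.
case=> [[I0 IB IL IR] I1 IP]; split.
- split; first by rewrite rmorph0.
  + by move=> a b ha hb; rewrite rmorphB; apply: IB.
  + by move=> r a ha; rewrite rmorphM; apply: IL.
  + by move=> r a ha; rewrite rmorphM; apply: IR.
- by rewrite rmorph1.
- move=> a b h; apply: IP => t.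
  case: hL => _ _ /(_ t) [u' [c [Su' [w [hw ->]]]]].
  rewrite mulrA -(@inv_central u' w Su' hw) -!mulrA; apply: IL.
  by have := h c; rewrite !rmorphM -mulrA.
Qed.

End Aux.

Theorem proposition2p7 (R T : nzRingType) (S : R -> Prop)
  (phi : {rmorphism R -> T}) :
  mult_closed S ->
  (forall s, S s -> central s /\ regular s) ->
  is_localization S phi ->
  almost_armendariz R ->
  almost_armendariz T.
Proof.
move=> hS hCR hL hA f g fg0 i j I hI.
have hC : forall s, S s -> central s by move=> s /hCR [].
have [u [Su [F eF]]] := @clear_poly _ _ _ phi hS hC hL f.
have [u' [Su' [G eG]]] := @clear_poly _ _ _ phi hS hC hL g.
have FG0 : F * G = 0.
  have e : map_poly phi (F * G) = 0.
    rewrite rmorphM /= eF eG -mulrA (mulrA f).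
    have -> : f * (phi u')%:P = (phi u')%:P * f.
      by apply/polyP => k; rewrite coefMC coefCM (@phi_central _ _ _ phi hC hL u' Su').
    by rewrite -mulrA fg0 !mulr0.
  apply/polyP => k; have := congr1 (fun p : {poly T} => p`_k) e.
  rewrite coef_map coef0 /= => h; case: hL => inj _ _; apply: inj.
  by rewrite h coef0 raddf0.
have hP := hA F G FG0 i j _ (@pre_prime _ _ _ phi hC hL I hI); simpl in hP.
case: (hL) => injphi /(_ u Su) [w hw] _.
case: (hL) => _ /(_ u' Su') [w' hw'] _.
have ef : f`_i = w * phi F`_i.
  have := congr1 (fun p : {poly T} => p`_i) eF; rewrite coef_map coefCM /= => ->; by rewrite mulrA (proj1 hw) mul1r.
have eg : g`_j = w' * phi G`_j.
  have := congr1 (fun p : {poly T} => p`_j) eG; rewrite coef_map coefCM /= => ->; by rewrite mulrA (proj1 hw') mul1r.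
rewrite ef eg -mulrA (mulrA (phi F`_i)) -(@inv_central _ _ _ phi hC hL u' w' Su' hw') -!mulrA -rmorphM mulrA.
by case: hI => [[_ _ IL _] _ _]; apply: IL.
Qed.
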